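(* Let $\Gamma$ be a 3-colex, $c\neq c'$ colors, and let $s$ be the syndrome of a $Z$-error on the 3D color code on $\Gamma$. Then the restriction $\pi_{cc'}(s)$ of $s$ to the vertices of $\Gamma^{*\setminus cc'}$ is a valid syndrome for a $Z$-error on the 3D toric code on $\Gamma^{*\setminus cc'}$, i.e. there exists a $Z$-error on the edges of $\Gamma^{*\setminus cc'}$ whose toric-code syndrome is $\pi_{cc'}(s)$.
   Context: Colors are $\{r,b,g,y\}$. A 3-colex $\Gamma$ is a 3-dimensional cell complex without boundary in which every vertex is 4-valent and lies in exactly four 3-cells, and whose 3-cells are properly 4-colored: every face lies in exactly two 3-cells, which have different colors. The dual complex $\Gamma^*$ has an $i$-cell for every $(3-i)$-cell of $\Gamma$, with incidences reversed; every 3-cell of $\Gamma^*$ is a tetrahedron. A vertex of $\Gamma^*$ is given the color of the corresponding 3-cell of $\Gamma$, so the four vertices of each tetrahedron have distinct colors; an edge with endpoint colors $x,y$ is an $xy$-edge. The 3D color code on $\Gamma$ has one qubit per tetrahedron $\nu$ of $\Gamma^*$, $X$-stabilizer generators $\prod_{\nu\ni v}X_\nu$ for vertices $v$ and $Z$-stabilizer generators $\prod_{\nu\supset e}Z_\nu$ for edges $e$. The syndrome of a $Z$-error $\prod_{\nu\in\Omega}Z_\nu$ is the function on vertices $s_v=|\{\nu\in\Omega:v\in\nu\}|\bmod 2$. For distinct $c,c'$ with remaining colors $d,d'$, the minor complex $\Gamma^{*\setminus cc'}$ is obtained by deleting all vertices of colors $c,c'$; its vertices are the $d$- and $d'$-vertices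 and its edges the $dd'$-edges of $\Gamma^*$. The 3D toric code on $\Gamma^{*\setminus cc'}$ has qubits on edges and $X$-checks $\prod_{e\ni v}X_e$ on vertices; the syndrome of a $Z$-error on edges at a vertex is the parity of the number of error edges incident to it. *)

(* Defs.v *)
From mathcomp Require Import all_boot.
Set Implicit Arguments. Unset Strict Implicit. Unset Printing Implicit Defensive.

(* Colors {r,b,g,y} are encoded as 'I_4 (r = 0, b = 1, g = 2, y = 3). *)
Definition color := 'I_4.

(* Raw cell data of the dual complex Gamma^*: vertices, edges, triangular
   faces (2-cells) and tetrahedra (3-cells), with incidences given by
   boundaries, and the vertex coloring. *)
Record dual_complex := DualComplex {
  vtx : finType;
  edg : finType;
  fac : finType;
  tet : finType;
  vcol : vtx -> color;
  ends : edg -> {set vtx};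
  fedges : fac -> {set edg};
  tfaces : tet -> {set fac}
}.

Section Derived.
Variable G : dual_complex.

Definition fverts (f : fac G) : {set vtx G} := \bigcup_(e in fedges f) ends e.
Definition tedges (t : tet G) : {set edg G} := \bigcup_(f in tfaces t) fedges f.
Definition tverts (t : tet G) : {set vtx G} := \bigcup_(e in tedges t) ends e.

(* Gamma^* is the dual of a 3-colex: every edge joins two vertices of
   different colors (dual of "every face of Gamma lies in two 3-cells of
   different colors"); every 3-cell is a tetrahedron whose four vertices
   have distinct colors (dual of "every vertex is 4-valent and lies in
   exactly four 3-cells"); every face lies in exactly two tetrahedra
   (no boundary); the complex is purely 3-dimensional. *)
Definition is_colex_dual : Prop :=
  [/\ (forall e : edg G, #|ends e| = 2 /\
         {in ends e &, forall u w, u != w -> vcol u != vcol w}),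
      (forall f : fac G, #|fedges f| = 3 /\ #|fverts f| = 3),
      (forall t : tet G,
         [/\ #|tfaces t| = 4, #|tverts t| = 4,
             {in tverts t &, injective (@vcol G)} &
             {in tverts t &, forall u w, u != w ->
                 exists2 e, e \in tedges t & ends e = [set u; w]}]),
      (forall f : fac G, #|[set t : tet G | f \in tfaces t]| = 2) &
      [/\ (forall v : vtx G, exists t, v \in tverts t),
          (forall e : edg G, exists t, e \in tedges t) &
          (forall f : fac G, exists t, f \in tfaces t)]].

(* Syndrome of the Z-error prod_{nu in Omega} Z_nu of the 3D color code. *)
Definition cc_syndrome (Omega : {set tet G}) (v : vtx G) : bool :=
  odd #|[set nu in Omega | v \in tverts nu]|.

(* Minor complex Gamma^{* \ cc'}: vertices not of color c, c'; edges both
   of whose endpoints are such vertices (i.e. the dd'-edges). *)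
Definition minor_vertex (c c' : color) (v : vtx G) : bool :=
  (vcol v != c) && (vcol v != c').
Definition minor_edge (c c' : color) (e : edg G) : bool :=
  [forall v in ends e, minor_vertex c c' v].

Definition tc_syndrome (Er : {set edg G}) (v : vtx G) : bool :=
  odd #|[set e in Er | v \in ends e]|.

End Derived.

(* Main.v *)
Require Import Defs.
From mathcomp Require Import all_boot.
Lemma card_sum (T : finType) (P : pred T) : #|[set x | P x]| = \sum_x (P x : nat).
Proof. by rewrite -sum1_card big_mkcond /=; apply: eq_bigr => x _; rewrite inE; case: (P x). Qed.

Lemma odd_sum_odd (I : finType) (F : I -> nat) :
  odd (\sum_i F i) = odd (\sum_i odd (F i)).
Proof.
apply: (big_rec2 (fun x y => odd x = odd y)) => // i x y _ H.
by rewrite !oddD H oddb.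
Qed.

Lemma parity (T U : finType) (g : T -> option U) (Om : {set T}) (Q : pred U) :
  odd #|[set u | Q u && odd #|[set t in Om | g t == Some u]|]| =
  odd #|[set t in Om | oapp Q false (g t)]|.
Proof.
rewrite !card_sum.
have -> : \sum_u ((Q u && odd #|[set t in Om | g t == Some u]|) : nat)
   = \sum_u odd (Q u * #|[set t in Om | g t == Some u]|).
  by apply: eq_bigr => u _; rewrite oddM; case: (Q u).
rewrite -odd_sum_odd.
have -> : \sum_u Q u * #|[set t in Om | g t == Some u]|
   = \sum_u \sum_t (Q u * ((t \in Om) && (g t == Some u))).
  by apply: eq_bigr => u _; rewrite card_sum big_distrr.
rewrite exchange_big /=; congr odd; apply: eq_bigr => t _.
case: (g t) => [u0|] /=; last first.
  rewrite andbF; by rewrite big1 // => u _; rewrite muln0.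
rewrite (bigD1 u0) //= eqxx andbT big1 ?addn0; first by case: (t \in Om); case: (Q u0).
by move=> u /negbTE Hu; rewrite (_ : (Some u0 == Some u) = false) ?andbF ?muln0 // eq_sym.
Qed.
Section S.
Variables (G : dual_complex) (HG : is_colex_dual G) (c c' : color) (Hcc : c != c').

Lemma M2 (t : tet G) : #|[set u in tverts t | minor_vertex c c' u]| = 2.
Proof.
case: HG => _ _ Ht _ _; case: (Ht t) => _ H4 Hinj _.
have Hall : @vcol G @: tverts t = setT.
  by apply/eqP; rewrite eqEcard subsetT card_in_imset // H4 cardsT card_ord.
have Hinj' : {in [set u in tverts t | minor_vertex c c' u] &, injective (@vcol G)}.
  by move=> x y; rewrite !inE => /andP[Hx _] /andP[Hy _]; apply: Hinj.
rewrite -(card_in_imset Hinj').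
have -> : @vcol G @: [set u in tverts t | minor_vertex c c' u] = ~: [set c; c'].
  apply/setP => x; rewrite !inE negb_or; apply/imsetP/idP.
    by case=> u; rewrite inE => /andP[_]; rewrite /minor_vertex => H ->.
  move=> Hx; have : x \in @vcol G @: tverts t by rewrite Hall inE.
  by case/imsetP=> u Hu Hxu; exists u => //; rewrite inE Hu /minor_vertex -Hxu.
have := cardsC [set c; c']; rewrite cards2 Hcc card_ord /=.
by move: #|~: [set c; c']| => n; case: n => [|[|[|n]]].
Qed.

Lemma ends_sub (t : tet G) e : e \in tedges t -> ends e \subset tverts t.
Proof. by move=> He; apply/subsetP => v Hv; apply/bigcupP; exists e. Qed.

Definition good (t : tet G) e := [&& e \in tedges t, minor_edge c c' e & #|ends e| == 2].

Lemma good_ex t : exists e, good t e.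
Proof.
have /eqP := M2 t; case/cards2P => u [w [Huw HM]].
have : u \in [set u in tverts t | minor_vertex c c' u] by rewrite HM !inE eqxx.
have : w \in [set u in tverts t | minor_vertex c c' u] by rewrite HM !inE eqxx orbT.
rewrite !inE => /andP[Hw _] /andP[Hu _].
case: HG => He _ Ht _ _; case: (Ht t) => _ _ _ Hedge.
case: (Hedge u w Hu Hw Huw) => e Het Hends.
exists e; rewrite /good Het Hends cards2 Huw andbT /=.
apply/forallP => v; apply/implyP; rewrite Hends => Hv.
have : v \in [set u in tverts t | minor_vertex c c' u] by rewrite HM.
by rewrite inE => /andP[].
Qed.

Lemma good_prop t e v : good t e -> minor_vertex c c' v ->
  (v \in ends e) = (v \in tverts t).
Proof.
case/and3P => Het /forallP Hm /eqP H2 Hv.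
have Hsub : ends e \subset [set u in tverts t | minor_vertex c c' u].
  apply/subsetP => x Hx; rewrite inE (subsetP (@ends_sub t e Het)) //=.
  by have := Hm x; rewrite Hx.
have : ends e == [set u in tverts t | minor_vertex c c' u].
  by rewrite eqEcard Hsub M2 H2.
by move/eqP ->; rewrite inE Hv andbT.
Qed.
End S.

Theorem corollary4 (G : dual_complex) (HG : is_colex_dual G)
  (c c' : color) (Hcc : c != c') (Omega : {set tet G}) :
  exists Er : {set edg G},
    {subset Er <= minor_edge c c'} /\
    forall v : vtx G, minor_vertex c c' v ->
      tc_syndrome Er v = cc_syndrome Omega v.
Proof.
pose f (t : tet G) := [pick e | good G c c' t e].
exists [set e | odd #|[set t in Omega | f t == Some e]|]; split.
  move=> e; rewrite inE.
  case: (set_0Vmem [set t in Omega | f t == Some e]) => [->|[t]]; first by rewrite cards0.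
  rewrite !inE => /andP[_ /eqP Hf] _; move: Hf; rewrite /f.
  by case: pickP => // e' Hg [<-]; case/and3P: Hg.
move=> v Hv; rewrite /tc_syndrome /cc_syndrome.
have -> : [set e in [set e | odd #|[set t in Omega | f t == Some e]|] | v \in ends e]
   = [set e | (v \in ends e) && odd #|[set t in Omega | f t == Some e]|].
  by apply/setP => e; rewrite !inE andbC.
rewrite (@parity _ _ f Omega (fun e => v \in ends e)); congr odd; apply: eq_card => t.
rewrite !inE; case: (t \in Omega) => //=; rewrite /f.
case: pickP => [e He|H] /=; first by rewrite (@good_prop G HG c c' Hcc t e v He Hv).
by case: (@good_ex G HG c c' Hcc t) => e He; rewrite H in He.
Qed.
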